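(* Let $n\ge 2$, $b>0$, $\rho=e^{2\pi i/n}$, and for $\lambda\in\mathbb{C}$ let $\zeta=\lambda^{1/n}$ denote the principal $n$-th root and $\tilde r_j(\lambda)=\exp(\rho^{j-1}\lambda^{1/n}b)$, $j=1,\dots,n$. For every $\beta\in(0,1)$ there is $\delta=\delta(\beta)>0$, with $\delta(\beta)\to0^+$ as $\beta\to0^+$, such that for all $j,k\in\{1,\dots,n\}$ and all $\lambda\in\mathbb{C}$, $$|\tilde r_k(\lambda)-\tilde r_j(\lambda)|\ge\beta\max\{|\tilde r_j(\lambda)|,|\tilde r_k(\lambda)|\}$$ provided $(\rho^{k-1}-\rho^{j-1})\zeta b\notin\bigcup_{m\in\mathbb{Z}}\{z\in\mathbb{C}:|z-2\pi i m|<\delta\}$.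
   Context: The $\tilde r_j(\lambda)$ are the Floquet multipliers of the equation $u^{(n)}=\lambda u$ with period $b$. *)

(* Defs.v *)
From Stdlib Require Import Reals ZArith.
From Coquelicot Require Import Coquelicot.
Open Scope R_scope.

Definition Cexp (z : C) : C :=
  (exp (fst z) * cos (snd z), exp (fst z) * sin (snd z)).

(* principal argument, in (-PI, PI]; Carg 0 = 0 *)
Definition Carg (z : C) : R :=
  let x := fst z in let y := snd z in
  if Rlt_dec 0 x then atan (y / x)
  else if Rlt_dec x 0 then
    (if Rle_dec 0 y then atan (y / x) + PI else atan (y / x) - PI)
  else if Rlt_dec 0 y then PI / 2
  else if Rlt_dec y 0 then - (PI / 2)
  else 0.

Definition Cprinc_root (n : nat) (z : C) : C :=
  if Req_EM_T (Cmod z) 0 then RtoC 0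
  else Cmult (RtoC (Rpower (Cmod z) (/ INR n)))
             (Cexp (0, Carg z / INR n)).

Fixpoint Cpown (z : C) (k : nat) : C :=
  match k with O => RtoC 1 | S k' => Cmult z (Cpown z k') end.

Definition rho (n : nat) : C := Cexp (0, 2 * PI / INR n).

Definition rtilde (n : nat) (b : R) (j : nat) (lam : C) : C :=
  Cexp (Cmult (Cmult (Cpown (rho n) (j - 1)) (Cprinc_root n lam)) (RtoC b)).

(* Main.v *)
Require Import Defs.
From Stdlib Require Import Reals ZArith Lra Psatz.
From Coquelicot Require Import Coquelicot.
Open Scope R_scope.

Lemma cos_le_quad (a : R) : - PI / 2 <= a -> a <= PI / 2 -> cos a <= 1 - a^2/2 + a^4/24.
Proof.
  intros h1 h2. destruct (cos_bound a 0 h1 h2) as [_ H].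
  unfold cos_approx, cos_term in H. simpl in H. lra.
Qed.

Lemma cos_2PIm (m : Z) : cos (2 * PI * IZR m) = 1 /\ sin (2 * PI * IZR m) = 0.
Proof.
  assert (hs : sin (IZR m * PI) = 0) by (apply sin_eq_0_1; eauto).
  replace (2 * PI * IZR m) with (2 * (IZR m * PI)) by ring.
  rewrite cos_2a_sin, sin_2a, hs. split; ring.
Qed.

Lemma core (beta x y : R) : 0 < beta < 1 -> x <= 0 ->
  (forall m : Z, x^2 + (y - 2*PI*IZR m)^2 >= (9*(beta/(1-beta)))^2) ->
  exp x ^2 - 2 * exp x * cos y + 1 >= beta^2.
Proof.
  intros hb hx H.
  set (T := beta/(1-beta)).
  assert (hT : beta <= T /\ beta = T / (1+T)).
  { unfold T. split. apply Rmult_le_reg_r with (1-beta). lra.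
    field_simplify; nra. field. lra. }
  assert (hT0 : 0 < T) by lra.
  assert (hc := COS_bound y).
  assert (hu : 0 < exp x) by apply exp_pos.
  assert (hu1 : exp x <= 1) by (rewrite <- exp_0; destruct (Req_dec x 0) as [->|?]; [lra | left; apply exp_increasing; lra]).
  destruct (Rle_dec T (-x)) as [hTx|hTx].
  -
    assert (he := exp_ineq1_le (-x)).
    assert (hxx : exp x * exp (-x) = 1) by (rewrite <- exp_plus; replace (x + - x) with 0 by ring; apply exp_0).
    assert (hu2 : exp x * (1 + T) <= 1) by nra.
    assert (hb2 : beta <= 1 - exp x).
    { destruct hT as [_ hT]. rewrite hT. apply Rmult_le_reg_r with (1+T). lra.
      field_simplify; lra. }
    nra.
  - set (m := Int_part (y / (2*PI) + /2)).
    destruct (base_Int_part (y / (2*PI) + /2)) as [h1 h2]. fold m in h1, h2.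
    set (y' := y - 2*PI*IZR m).
    assert (hPI := PI_RGT_0). assert (hPI4 := PI_4).
    assert (hy'1 : y' <= PI).
    { unfold y'. assert (hy : y = 2*PI*(y / (2*PI))) by (field; lra).
      assert (2*PI*(y/(2*PI)) - 2*PI*IZR m <= 2*PI*(/2)) by (rewrite <- Rmult_minus_distr_l; apply Rmult_le_compat_l; lra).
      lra. }
    assert (hy'2 : - PI <= y').
    { unfold y'. assert (hy : y = 2*PI*(y / (2*PI))) by (field; lra).
      assert (hz : -/2 <= y/(2*PI) - IZR m) by lra.
      apply Rmult_le_compat_l with (r := 2*PI) in hz; [|lra].
      lra. }
    assert (hcy : cos y = cos y').
    { replace y with (y' + 2*PI*IZR m) at 1 by (unfold y'; ring).
      rewrite cos_plus. destruct (cos_2PIm m) as [-> ->]. ring. }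
    rewrite hcy.
    specialize (H m). fold y' in H.
    apply Rnot_le_lt in hTx. assert (hxT : x^2 < T^2) by nra.
    fold T in H.
    assert (hy'sq : y'^2 >= 80 * T^2) by (replace ((9*T)^2) with (81*T^2) in H by ring; lra).
    assert (hT2 : T < 1/2).
    { assert (y'^2 <= PI^2) by nra. assert (PI^2 <= 16) by nra. assert (T^2 < 1/4) by lra. nra. }
    assert (hu3 : 1/2 < exp x).
    { assert (he := exp_ineq1_le x). lra. }
    destruct (Rle_dec (PI/2) (Rabs y')) as [hab|hab].
    + assert (cos y' <= 0).
      { destruct (Rle_dec 0 y').
        - rewrite Rabs_right in hab by lra. apply cos_le_0; lra.
        - rewrite Rabs_left in hab by lra. rewrite <- cos_neg. apply cos_le_0; lra. }
      nra.
    + assert (hyb : - PI / 2 <= y' <= PI/2).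
      { split; [ | ]; unfold Rabs in hab; destruct (Rcase_abs y'); lra. }
      assert (hq := cos_le_quad y' (proj1 hyb) (proj2 hyb)).
      assert (y'^2 <= 4) by nra.
      assert (hq2 : 1 - cos y' >= y'^2/3) by nra.
      nra.
Qed.

Definition dlt (beta : R) := 9 * (beta / (1 - beta)).

Lemma core2 (beta x y : R) : 0 < beta < 1 ->
  (forall m : Z, x^2 + (y - 2*PI*IZR m)^2 >= (dlt beta)^2) ->
  exp x ^2 - 2 * exp x * cos y + 1 >= (beta * Rmax 1 (exp x))^2.
Proof.
  intros hb H. unfold dlt in H.
  destruct (Rle_dec x 0) as [hx|hx].
  - rewrite Rmax_left. 2: { rewrite <- exp_0; destruct (Req_dec x 0) as [->|?]; [lra | left; apply exp_increasing; lra]. }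
    replace ((beta*1)^2) with (beta^2) by ring. now apply core.
  - rewrite Rmax_right. 2: { rewrite <- exp_0; left; apply exp_increasing; lra. }
    assert (Hc := core beta (-x) (-y) hb ltac:(lra)).
    assert (Hc' : exp (- x) ^ 2 - 2 * exp (- x) * cos (- y) + 1 >= beta ^ 2).
    { apply Hc. intros m. specialize (H (- m)%Z). rewrite opp_IZR in H. nra. }
    rewrite cos_neg in Hc'.
    assert (hxx : exp x * exp (-x) = 1) by (rewrite <- exp_plus; replace (x + - x) with 0 by ring; apply exp_0).
    assert (hp := exp_pos x).
    assert (E : exp x ^ 2 - 2 * exp x * cos y + 1 = exp x ^2 * (exp (- x) ^ 2 - 2 * exp (- x) * cos y + 1)).
    { replace (exp x ^2 * (exp (- x) ^ 2 - 2 * exp (- x) * cos y + 1)) with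
        ((exp x * exp (-x))^2 - 2 * exp x * (exp x * exp (-x)) * cos y + exp x ^2) by ring.
      rewrite hxx. ring. }
    rewrite E. replace ((beta * exp x)^2) with (exp x ^2 * beta^2) by ring.
    apply Rle_ge, Rmult_le_compat_l. nra. lra.
Qed.

Lemma D_nonneg (x y : R) : 0 <= exp x ^2 - 2 * exp x * cos y + 1.
Proof.
  assert (H:=exp_pos x). assert (H2 := COS_bound y).
  assert (0 <= exp x * (1 - cos y)) by (apply Rmult_le_pos; lra).
  assert (0 <= (exp x - 1)^2) by apply pow2_ge_0. nra.
Qed.

Lemma Cexp_diff (p q x y : R) :
  Cmod (Cminus (Cexp (p + x, q + y)) (Cexp (p, q))) =
  exp p * sqrt (exp x ^2 - 2 * exp x * cos y + 1).
Proof.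
  unfold Cmod, Cexp, Cminus, Cplus, Copp. simpl fst; simpl snd.
  rewrite <- (sqrt_pow2 (exp p) (Rlt_le _ _ (exp_pos p))) at 3.
  rewrite <- sqrt_mult by (try apply pow2_ge_0; apply D_nonneg).
  f_equal. rewrite exp_plus, cos_plus, sin_plus.
  assert (hq : sin q ^ 2 + cos q ^ 2 = 1) by (rewrite <- (sin2_cos2 q); unfold Rsqr; ring).
  assert (hy : sin y ^ 2 + cos y ^ 2 = 1) by (rewrite <- (sin2_cos2 y); unfold Rsqr; ring).
  transitivity (exp p ^2 * (exp x ^2 * (sin q ^ 2 + cos q ^ 2) * (sin y ^ 2 + cos y ^ 2)
     - 2 * exp x * cos y * (sin q ^ 2 + cos q ^ 2) + (sin q ^ 2 + cos q ^ 2))).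
  ring. rewrite hq, hy. ring.
Qed.

Lemma Cexp_mod (p q : R) : Cmod (Cexp (p, q)) = exp p.
Proof.
  unfold Cmod, Cexp; simpl fst; simpl snd.
  replace ((exp p * cos q) ^ 2 + (exp p * sin q) ^ 2) with (exp p ^ 2 * (sin q ^2 + cos q^2)) by ring.
  assert (hs := sin2_cos2 q). unfold Rsqr in hs. replace (sin q ^ 2 + cos q ^ 2) with 1 by (rewrite <- hs; ring).
  rewrite Rmult_1_r. apply sqrt_pow2. left; apply exp_pos.
Qed.

Lemma dlt_lim : filterlim dlt (at_right 0) (locally 0).
Proof.
  apply filterlim_locally. intros eps.
  assert (he := cond_pos eps).
  exists (mkposreal (Rmin (1/2) (eps/18)) ltac:(apply Rmin_pos; lra)).
  intros y Hy Hy0. simpl in Hy.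
  unfold ball in Hy |- *; simpl in Hy |- *. unfold AbsRing_ball, abs, minus, plus, opp in Hy |- *; simpl in Hy |- *.
  assert (h1 := Rmin_l (1/2) (eps/18)). assert (h2 := Rmin_r (1/2) (eps/18)).
  rewrite Ropp_0, Rplus_0_r in Hy.
  rewrite Rabs_right in Hy by lra.
  unfold dlt. rewrite Ropp_0, Rplus_0_r.
  assert (0 < 9 * (y / (1 - y))).
  { apply Rmult_lt_0_compat; [lra|]. apply Rdiv_lt_0_compat; lra. }
  rewrite Rabs_right by lra.
  assert (9 * (y / (1 - y)) <= 18 * y).
  { apply Rmult_le_reg_r with (1 - y). lra. field_simplify; nra. }
  lra.
Qed.

Theorem corollary1 (n : nat) (b : R) (hn : (2 <= n)%nat) (hb : 0 < b) :
  exists delta : R -> R,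
    (forall beta, 0 < beta < 1 -> 0 < delta beta) /\
    filterlim delta (at_right 0) (locally 0) /\
    forall beta, 0 < beta < 1 ->
    forall (j k : nat) (lam : C),
      (1 <= j <= n)%nat -> (1 <= k <= n)%nat ->
      (forall m : Z,
         Cmod (Cminus
                 (Cmult (Cmult (Cminus (Cpown (rho n) (k - 1)) (Cpown (rho n) (j - 1)))
                               (Cprinc_root n lam)) (RtoC b))
                 (0, 2 * PI * IZR m)) >= delta beta) ->
      Cmod (Cminus (rtilde n b k lam) (rtilde n b j lam))
        >= beta * Rmax (Cmod (rtilde n b j lam)) (Cmod (rtilde n b k lam)).
Proof.
  exists dlt. split; [|split; [exact dlt_lim|]].
  { intros beta hb'. unfold dlt. apply Rmult_lt_0_compat; [lra|]. apply Rdiv_lt_0_compat; lra. }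
  intros beta hbt j k lam _ _ H.
  unfold rtilde.
  generalize (Cpown (rho n) (k - 1)) (Cpown (rho n) (j - 1)) (Cprinc_root n lam) H.
  clear H. intros r2 r1 z H.
  assert (E : Cmult (Cmult r2 z) (RtoC b) =
     Cplus (Cmult (Cmult r1 z) (RtoC b)) (Cmult (Cmult (Cminus r2 r1) z) (RtoC b))).
  { destruct r1, r2, z. unfold Cmult, Cplus, Cminus, Copp, RtoC; simpl. f_equal; ring. }
  rewrite E. revert H.
  generalize (Cmult (Cmult r1 z) (RtoC b)) (Cmult (Cmult (Cminus r2 r1) z) (RtoC b)).
  intros [p q] [x y] H.
  change (Cplus (p, q) (x, y)) with (p + x, q + y).
  rewrite Cexp_diff, !Cexp_mod, exp_plus.
  replace (exp p * exp x) with (exp p * (exp x)) by ring.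
  rewrite <- (Rmult_1_r (exp p)) at 2.
  rewrite RmaxRmult by (left; apply exp_pos).
  assert (Hd : forall m : Z, x^2 + (y - 2*PI*IZR m)^2 >= (dlt beta)^2).
  { intros m. specialize (H m).
    unfold Cmod, Cminus, Cplus, Copp in H; simpl fst in H; simpl snd in H.
    assert (hd0 : 0 <= dlt beta).
    { unfold dlt. left. apply Rmult_lt_0_compat; [lra|]. apply Rdiv_lt_0_compat; lra. }
    set (S := (x + - 0) ^ 2 + (y + - (2 * PI * IZR m)) ^ 2) in H.
    assert (hS : 0 <= S) by (unfold S; apply Rplus_le_le_0_compat; apply pow2_ge_0).
    assert (hS2 := pow2_sqrt S hS).
    assert (dlt beta ^ 2 <= sqrt S ^ 2) by nra.
    replace (x^2 + (y - 2*PI*IZR m)^2) with S by (unfold S; ring). lra. }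
  assert (Hc := core2 beta x y hbt Hd).
  assert (hM : 0 <= beta * Rmax 1 (exp x)).
  { apply Rmult_le_pos; [lra|]. apply Rle_trans with 1; [lra|apply Rmax_l]. }
  assert (hsq : beta * Rmax 1 (exp x) <= sqrt (exp x ^ 2 - 2 * exp x * cos y + 1)).
  { rewrite <- (sqrt_pow2 _ hM). apply sqrt_le_1_alt. lra. }
  assert (hp := exp_pos p).
  apply Rle_ge. nra.
Qed.
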